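(* Let $h(x)$ and $h'(x)$ be scattered polynomials in $\mathbb{F}_{q^n}[x]$ in standard form, both $\mathrm{GL}$-equivalent to a scattered polynomial $f(x)$. Then there exist $a,b\in\mathbb{F}_{q^n}^*$ such that $h'(x)=ah(bx)$ for all $x$, or $h'(x)=ah^{-1}(bx)$ for all $x$.
   Context: $q$ is a prime power, $n>1$. A $q$-polynomial $h(x)=\sum_{i=0}^{n-1}b_ix^{q^i}\in\mathbb{F}_{q^n}[x]$ is scattered if for all $y,z\in\mathbb{F}_{q^n}$, $zh(y)-yh(z)=0$ implies $y,z$ are $\mathbb{F}_q$-linearly dependent. $U_h=\{(x,h(x))\colon x\in\mathbb{F}_{q^n}\}$; two $q$-polynomials $f,g$ are $\mathrm{GL}$-equivalent if $U_fA=U_g$ for some $A\in\mathrm{GL}(2,q^n)$, where $A$ acts on row vectors by right multiplication. With $\Delta_h=\{(i-j)\bmod n\colon b_ib_j\neq0,\ i\neq j\}\cup\{n\}$ and $t_h=\gcd(\Delta_h)$, $h$ is in standard form if $t_h>1$. A scattered polynomial in standard form is a bijection of $\mathbb{F}_{q^n}$, and $h^{-1}$ denotes its inverse map (itself an $\mathbb{F}_q$-linear map of $\mathbb{F}_{q^n}$). *)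

(* Defs.v *)
From HB Require Import structures.
From mathcomp Require Import all_boot all_order all_algebra finfield.
Set Implicit Arguments. Unset Strict Implicit. Unset Printing Implicit Defensive.
Import GRing.Theory.
Local Open Scope ring_scope.

(* L plays the role of F_{q^n}; F_q is the subfield {c | c^q = c}. *)
Section QPoly.
Variables (L : finFieldType) (q n : nat).

Definition qlin (b : 'I_n -> L) (x : L) : L :=
  \sum_(i < n) b i * x ^+ (q ^ i).

Definition in_Fq (c : L) : bool := c ^+ q == c.

Definition Fq_dep (y z : L) : Prop :=
  exists c d : L, [/\ in_Fq c, in_Fq d, (c != 0) || (d != 0) & c * y + d * z = 0].

Definition scattered (b : 'I_n -> L) : Prop :=
  forall y z : L, z * qlin b y - y * qlin b z = 0 -> Fq_dep y z.

(* t_h = gcd (Delta_h), Delta_h = {(i-j) mod n | b_i b_j <> 0, i <> j} u {n} *)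
Definition t_of (b : 'I_n -> L) : nat :=
  gcdn (\big[gcdn/0%N]_(i < n) \big[gcdn/0%N]_(j < n | (i != j) && (b i * b j != 0))
          (((i + n) - j) %% n)%N) n.

Definition standard_form (b : 'I_n -> L) : bool := (1 < t_of b)%N.

Definition U_set (h : L -> L) : {set 'rV[L]_2} :=
  [set \row_(k < 2) (if k == 0 then x else h x) | x : L].

Definition GL_equiv (f g : L -> L) : Prop :=
  exists A : 'M[L]_2, A \in unitmx /\ [set u *m A | u in U_set f] = U_set g.

(* the inverse map of h (meaningful when h is a bijection) *)
Definition qinv (b : 'I_n -> L) (y : L) : L :=
  odflt 0 [pick x | qlin b x == y].
End QPoly.

(* Main.v *)
Require Import Defs.
From HB Require Import structures.
From mathcomp Require Import all_boot all_order all_algebra all_fingroup all_solvable finfield.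
From mathcomp Require Import ring zify.
Set Implicit Arguments. Unset Strict Implicit. Unset Printing Implicit Defensive.
Import GRing.Theory.
Local Open Scope ring_scope.

Definition Rel (L : finFieldType) (g1 g2 : L -> L) (M : 'M[L]_2) : Prop :=
  forall x, g2 (x * M 0 0 + g1 x * M 1 0) = x * M 0 1 + g1 x * M 1 1.

Lemma mul2E (R : pzRingType) (M N : 'M[R]_2) i j :
  (M *m N) i j = M i 0 * N 0 j + M i 1 * N 1 j.
Proof.
rewrite !mxE !big_ord_recl big_ord0 addr0.
have E1 : lift ord0 ord0 = 1 :> 'I_2 by apply: val_inj.
have E0 : ord0 = 0 :> 'I_2 by apply: val_inj.
by rewrite E1 E0.
Qed.

Lemma Rel_comp (L : finFieldType) (g1 g2 g3 : L -> L) M N :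
  Rel g1 g2 M -> Rel g2 g3 N -> Rel g1 g3 (M *m N).
Proof.
move=> HM HN x; rewrite !mul2E.
have := HN (x * M 0 0 + g1 x * M 1 0); rewrite HM => E.
have -> : x * (M 0 0 * N 0 0 + M 0 1 * N 1 0) + g1 x * (M 1 0 * N 0 0 + M 1 1 * N 1 0)
  = (x * M 0 0 + g1 x * M 1 0) * N 0 0 + (x * M 0 1 + g1 x * M 1 1) * N 1 0 by ring.
rewrite E; ring.
Qed.

Section Additive.
Variables (L : finFieldType) (g : L -> L).
Hypothesis gD : forall x y, g (x + y) = g x + g y.
Lemma g0 : g 0 = 0.
Proof. by apply: (addrI (g 0)); rewrite -gD !addr0. Qed.
Lemma gN x : g (- x) = - g x.
Proof. by apply/eqP; rewrite -addr_eq0 -gD addNr g0. Qed.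
Lemma gB x y : g (x - y) = g x - g y.
Proof. by rewrite gD gN. Qed.
End Additive.

Lemma Rel1 (L : finFieldType) (g : L -> L) : Rel g g 1.
Proof. by move=> x; rewrite !mxE /= mulr1 mulr0 mulr0 mulr1 addr0 add0r. Qed.

Lemma RelB (L : finFieldType) (g1 g2 : L -> L) M N :
  (forall x y, g2 (x + y) = g2 x + g2 y) ->
  Rel g1 g2 M -> Rel g1 g2 N -> Rel g1 g2 (M - N).
Proof.
move=> gD HM HN x; rewrite !mxE.
have -> : x * (M 0 0 - N 0 0) + g1 x * (M 1 0 - N 1 0) =
  (x * M 0 0 + g1 x * M 1 0) - (x * N 0 0 + g1 x * N 1 0) by ring.
rewrite gB // HM HN; ring.
Qed.

Section Wedd.
Variables (L : finFieldType) (g : L -> L).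
Hypothesis gD : forall x y, g (x + y) = g x + g y.
Hypothesis unitS : forall M, Rel g g M -> M != 0 -> M \in unitmx.
Hypothesis invS : forall M, Rel g g M -> M \in unitmx -> Rel g g (invmx M).

Definition Sp := [pred M : 'M[L]_2 | [forall x, g (x * M 0 0 + g x * M 1 0) == x * M 0 1 + g x * M 1 1]].
Lemma SpP M : reflect (Rel g g M) (M \in Sp).
Proof. by apply: (iffP forallP) => H x; [apply/eqP/H | apply/eqP/H]. Qed.

Lemma Sp_subring : subring_closed Sp.
Proof.
split; first exact/SpP/Rel1.
  by move=> M N /SpP HM /SpP HN; apply/SpP/RelB.
by move=> M N /SpP HM /SpP HN; apply/SpP/Rel_comp.
Qed.

HB.instance Definition _ := GRing.isSubringClosed.Build _ Sp Sp_subring.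
Definition ST := {M : 'M[L]_2 | M \in Sp}.
HB.instance Definition _ := [isSub of ST for @sval _ (fun M => M \in Sp)].
HB.instance Definition _ := [Finite of ST by <:].
HB.instance Definition _ := [SubChoice_isSubNzRing of ST by <:].
Definition unitST : pred ST := fun u => val u != 0.
Definition invST (u : ST) : ST := insubd u (invmx (val u)).

Lemma invST_val (u : ST) : unitST u -> val (invST u) = invmx (val u).
Proof.
move=> Hu; rewrite /invST insubdK //; apply/SpP/invS; first exact/SpP/valP.
exact: unitS (SpP _ (valP u)) Hu.
Qed.

Lemma mulVST : {in unitST, left_inverse 1 invST *%R}.
Proof.
move=> u Hu; apply: val_inj; rewrite /= invST_val //.
have Uu : sval u \in unitmx by apply: unitS (SpP _ (valP u)) Hu.
exact: (mulVmx Uu).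
Qed.
Lemma divST : {in unitST, right_inverse 1 invST *%R}.
Proof.
move=> u Hu; apply: val_inj; rewrite /= invST_val //.
have Uu : sval u \in unitmx by apply: unitS (SpP _ (valP u)) Hu.
exact: (mulmxV Uu).
Qed.
Lemma unitSTP : forall x y : ST, y * x = 1 /\ x * y = 1 -> unitST x.
Proof.
move=> x y [_ H]; rewrite /unitST; apply/eqP => H0.
have := congr1 val H; rewrite /= H0 mul0r => /esym/eqP.
by rewrite oner_eq0.
Qed.
Lemma invST_out : {in [predC unitST], invST =1 id}.
Proof.
move=> u; rewrite inE /unitST negbK => /eqP H0.
have E : invmx (val u) = val u.
  by apply: invmx_out; rewrite H0 inE unitmxE det0 unitr0.
by apply: val_inj; rewrite /invST insubdK E //; exact: valP.
Qed.
HB.instance Definition _ := GRing.NzRing_hasMulInverse.Build ST mulVST divST unitSTP invST_out.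

Lemma ST_dom : GRing.integral_domain_axiom ST.
Proof.
move=> x y H; case: (eqVneq x 0) => //= Hx; apply/eqP/val_inj.
have Ux : val x \in unitmx.
  apply: unitS; first exact/SpP/valP.
  by apply: contra Hx => /eqP H0; apply/eqP/val_inj.
have E : val x *m val y = 0 := congr1 val H.
by rewrite -[val y]mul1mx -(mulVmx Ux) -mulmxA E mulmx0.
Qed.

Lemma Rel_comm M N : Rel g g M -> Rel g g N -> M *m N = N *m M.
Proof.
move=> HM HN.
have := finDomain_mulrC ST_dom (Sub M (introT (SpP _) HM)) (Sub N (introT (SpP _) HN)).
by move/(congr1 val).
Qed.
End Wedd.

Lemma det2 (R : comPzRingType) (M : 'M[R]_2) : \det M = M 0 0 * M 1 1 - M 0 1 * M 1 0.
Proof.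
rewrite (expand_det_row _ 0) !big_ord_recl big_ord0 addr0 /cofactor !det_mx11 !mxE /=.
have E1 : lift ord0 ord0 = 1 :> 'I_2 by apply: val_inj.
have E0 : ord0 = 0 :> 'I_2 by apply: val_inj.
have E2 : lift 1 (0 : 'I_1) = 0 :> 'I_2 by apply: val_inj.
rewrite !E1 !E0 E2 /bump /= expr0 expr1; ring.
Qed.


Definition rv (L : finFieldType) (a b : L) : 'rV[L]_2 :=
  \row_(k < 2) (if k == 0 then a else b).

Lemma ord2 (k : 'I_2) : k = 0 \/ k = 1.
Proof.
case: k => [[|[|m]] Hk]; [left|right|by []]; exact: val_inj.
Qed.

Lemma rvM (L : finFieldType) (a b : L) (M : 'M[L]_2) :
  rv a b *m M = rv (a * M 0 0 + b * M 1 0) (a * M 0 1 + b * M 1 1).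
Proof.
apply/rowP => k; rewrite !mxE !big_ord_recl big_ord0 addr0 !mxE /=.
have E1 : lift ord0 ord0 = 1 :> 'I_2 by apply: val_inj.
have E0 : ord0 = 0 :> 'I_2 by apply: val_inj.
rewrite E1 E0 /=.
by case: (ord2 k) => ->.
Qed.

Lemma rv_inj (L : finFieldType) (a b c d : L) : rv a b = rv c d -> a = c /\ b = d.
Proof.
move=> E; split.
  by have := congr1 (fun v : 'rV[L]_2 => v 0 0) E; rewrite !mxE.
by have := congr1 (fun v : 'rV[L]_2 => v 0 1) E; rewrite !mxE.
Qed.

Lemma rv0 (L : finFieldType) : rv (0 : L) 0 = 0.
Proof. by apply/rowP => k; rewrite !mxE; case: ifP. Qed.

Lemma Rel_inv (L : finFieldType) (g : L -> L) (M : 'M[L]_2) :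
  (forall x y, g (x + y) = g x + g y) ->
  Rel g g M -> M \in unitmx -> Rel g g (invmx M).
Proof.
move=> gD HM UM.
pose u x := x * M 0 0 + g x * M 1 0.
have rvu x : rv x (g x) *m M = rv (u x) (g (u x)) by rewrite rvM HM.
have uinj : injective u.
  move=> x y Exy.
  have : rv (x - y) (g (x - y)) *m M = 0.
    rewrite rvu; have -> : u (x - y) = 0.
      rewrite /u gB // (_ : forall a b c d e f : L, (a - b) * c + (d - e) * f = (a * c + d * f) - (b * c + e * f)); last by move=> *; ring.
      by rewrite -/(u x) -/(u y) Exy subrr.
    by rewrite g0 // rv0.
  move/(congr1 (mulmx^~ (invmx M))); rewrite mulmxK // mul0mx -rv0 => /rv_inj [+ _].
  by move/eqP; rewrite subr_eq0 => /eqP.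
have [v uv vu] := injF_bij uinj.
move=> y.
have := rvu (v y); rewrite vu => /(congr1 (mulmx^~ (invmx M))).
rewrite mulmxK // rvM => /esym /rv_inj [-> ->].
by [].
Qed.

Lemma GL_Rel (L : finFieldType) (g1 g2 : L -> L) :
  GL_equiv g1 g2 -> exists A : 'M[L]_2,
    [/\ A \in unitmx, Rel g1 g2 A & Rel g2 g1 (invmx A)].
Proof.
move=> [A [UA EA]]; exists A; split => //.
  move=> x.
  have : rv x (g1 x) *m A \in U_set g2.
    by rewrite -EA; apply: imset_f; apply/imsetP; exists x.
  case/imsetP => y _; rewrite rvM -/(rv y (g2 y)) => /rv_inj [-> ->].
  by [].
move=> y.
have : rv y (g2 y) \in [set u *m A | u in U_set g1].
  by rewrite EA; apply/imsetP; exists y.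
case/imsetP => w /imsetP [x _ ->] /(congr1 (mulmx^~ (invmx A))).
rewrite -/(rv x (g1 x)) mulmxK // rvM => /rv_inj [-> ->].
by [].
Qed.

Section QF.
Variables (L : finFieldType) (q n : nat).
Hypotheses (hq : (1 < q)%N) (hn : (1 < n)%N) (hL : #|L| = (q ^ n)%N).

Lemma qnat : [char L].-nat q.
Proof.
have [p pr pc] := finPcharP L.
have /abelem_pgroup := fin_ring_pchar_abelem pc.
rewrite /pgroup cardsT hL pnatX orbC.
have -> : (n == 0)%N = false by case: n hn.
by move=> /= /pi_pnat; apply.
Qed.

Lemma qpow_nat i : [char L].-nat (q ^ i)%N.
Proof. by rewrite pnatX qnat. Qed.

Lemma frobD i (x y : L) : (x + y) ^+ (q ^ i)%N = x ^+ (q ^ i)%N + y ^+ (q ^ i)%N.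
Proof. exact: exprDn_pchar (qpow_nat i). Qed.

Lemma frobN i (x : L) : (- x) ^+ (q ^ i)%N = - x ^+ (q ^ i)%N.
Proof. exact: exprNn_pchar (qpow_nat i). Qed.

Lemma FqX (c : L) i : in_Fq q c -> c ^+ (q ^ i)%N = c.
Proof.
move=> /eqP Hc; elim: i => [|i IH]; first by rewrite expn0 expr1.
by rewrite expnS exprM Hc.
Qed.

Lemma Fq_mul (c d : L) : in_Fq q c -> in_Fq q d -> in_Fq q (c * d).
Proof. by move=> /eqP Hc /eqP Hd; apply/eqP; rewrite exprMn Hc Hd. Qed.
Lemma Fq_opp (c : L) : in_Fq q c -> in_Fq q (- c).
Proof. by move=> /eqP Hc; apply/eqP; have := frobN 1 c; rewrite expn1 Hc. Qed.
Lemma Fq_inv (c : L) : in_Fq q c -> in_Fq q (c^-1).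
Proof. by move=> /eqP Hc; apply/eqP; rewrite exprVn Hc. Qed.

Lemma qlinD (b : 'I_n -> L) x y : qlin q b (x + y) = qlin q b x + qlin q b y.
Proof.
by rewrite /qlin -big_split; apply: eq_bigr => i _; rewrite frobD mulrDr.
Qed.

Lemma qlinZ (b : 'I_n -> L) c x : in_Fq q c -> qlin q b (c * x) = c * qlin q b x.
Proof.
move=> Hc; rewrite /qlin mulr_sumr; apply: eq_bigr => i _.
by rewrite exprMn (@FqX c i Hc) mulrCA.
Qed.

Lemma Fq_card : (#|[pred c : L | in_Fq q c]| <= q)%N.
Proof.
pose P : {poly L} := 'X^q - 'X.
have szP : size P = q.+1.
  by rewrite size_polyDl size_polyXn // size_polyN size_polyX; exact: hq.
have P0 : P != 0 by rewrite -size_poly_eq0 szP.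
have := @max_poly_roots _ P (enum [pred c : L | in_Fq q c]) P0.
rewrite szP ltnS cardE; apply.
  apply/allP => c; rewrite mem_enum inE => /eqP Hc.
  by rewrite /root !hornerE Hc subrr.
exact: enum_uniq.
Qed.

Lemma dep_line (A : {pred L}) :
  (forall x y, x \in A -> y \in A -> Fq_dep q x y) -> (#|A| <= q)%N.
Proof.
move=> HA.
case: (pickP [pred a in A | a != 0]) => [a0 /andP[Aa0 nz] | none].
  apply: (leq_trans _ Fq_card).
  apply: (leq_trans _ (leq_imset_card (fun c => c * a0) _)).
  apply: subset_leq_card; apply/subsetP => x Ax.
  have [c [d [Fc Fd cd E]]] := HA a0 x Aa0 Ax.
  have dnz : d != 0.
    apply: contraTneq cd => d0; move: E; rewrite d0 mul0r addr0 => /eqP.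
    by rewrite mulf_eq0 (negbTE nz) orbF => /eqP ->; rewrite eqxx.
  apply/imsetP; exists (- c / d); first by rewrite inE; apply: Fq_mul; [apply: Fq_opp | apply: Fq_inv].
  have Ex : d * x = - (c * a0) by apply/eqP; rewrite -addr_eq0 addrC E.
  by apply: (mulfI dnz); rewrite Ex; field.
apply: (leq_trans _ (ltnW hq)).
apply: (leq_trans (subset_leq_card (_ : A \subset pred1 0))); last by rewrite card1.
apply/subsetP => x Ax; have := none x; rewrite /= Ax /= => /negbFE.
by rewrite inE.
Qed.

Lemma count_additive (u : L -> L) :
  (forall x y, u (x + y) = u x + u y) ->
  (forall x y, u x = 0 -> u y = 0 -> Fq_dep q x y) ->
  (forall x y, Fq_dep q (u x) (u y)) -> (#|L| <= q * q)%N.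
Proof.
move=> uD Hker Him.
pose pre v := odflt 0 [pick y | u y == v].
have preP x : u (pre (u x)) = u x.
  rewrite /pre; case: pickP => [y /eqP //| /(_ x)]; by rewrite eqxx.
pose F x := (x - pre (u x), u x).
have Finj : injective F.
  move=> x y [E1 E2]; move: E1; rewrite E2 => /addIr //.
have := card_imset [pred x | true] Finj.
have -> : #|[pred x : L | true]| = #|L| by apply: eq_card.
move=> <-.
apply: (leq_trans (subset_leq_card (_ : [set F x | x in [pred x | true]] \subset
   setX [set x | u x == 0] [set u x | x in L]))).
  apply/subsetP => w /imsetP [x _ ->]; rewrite inE /= !inE.
  by rewrite gB // preP subrr eqxx /= imset_f.
rewrite cardsX leq_mul //; apply: dep_line.
  by move=> x y; rewrite !inE => /eqP ? /eqP ?; apply: Hker.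
by move=> x y /imsetP [x' _ ->] /imsetP [y' _ ->].
Qed.


Lemma scalar_Fq (b : 'I_n -> L) k :
  scattered q b -> qlin q b k = k * qlin q b 1 -> in_Fq q k.
Proof.
move=> Hs Hk.
have [c [d [Fc Fd cd E]]] : Fq_dep q 1 k by apply: Hs; rewrite Hk mul1r subrr.
have dnz : d != 0.
  apply: contraTneq cd => d0; move: E; rewrite d0 mul0r addr0 mulr1 => ->.
  by rewrite eqxx.
have -> : k = - c / d.
  apply: (mulfI dnz); have Ek : d * k = - c by apply/eqP; rewrite -addr_eq0 addrC -(mulr1 c) E.
  by rewrite Ek; field.
by apply: Fq_mul; [apply: Fq_opp | apply: Fq_inv].
Qed.

Lemma Rel_unit (b : 'I_n -> L) M : scattered q b -> (2 < n)%N ->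
  Rel (qlin q b) (qlin q b) M -> M != 0 -> M \in unitmx.
Proof.
move=> Hs n3 HM nzM; apply/negPn/negP => nU.
have hD := qlinD b; rewrite /scattered in Hs.
move: (qlin q b) Hs HM hD => h Hs HM hD.
have dM : M 0 0 * M 1 1 - M 0 1 * M 1 0 = 0.
  by move: nU; rewrite unitmxE unitfE det2 negbK => /eqP.
pose u x := x * M 0 0 + h x * M 1 0.
pose v x := x * M 0 1 + h x * M 1 1.
have uD x y : u (x + y) = u x + u y by rewrite /u hD; ring.
have hu x : h (u x) = v x by exact: HM.
have Hker x y : u x = 0 -> u y = 0 -> Fq_dep q x y.
  move=> ux uy.
  have vx : v x = 0 by rewrite -hu ux g0.
  have vy : v y = 0 by rewrite -hu uy g0.
  apply: Hs; apply/eqP/negPn/negP => nd.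
  move/negP: nzM; apply; apply/eqP/matrixP => i j; rewrite mxE.
  apply: (mulfI nd); rewrite mulr0.
  case: (ord2 i) => ->; case: (ord2 j) => ->.
  - by transitivity (h x * u y - h y * u x); [rewrite /u; ring | rewrite ux uy; ring].
  - by transitivity (h x * v y - h y * v x); [rewrite /v; ring | rewrite vx vy; ring].
  - by transitivity (y * u x - x * u y); [rewrite /u; ring | rewrite ux uy; ring].
  - by transitivity (y * v x - x * v y); [rewrite /v; ring | rewrite vx vy; ring].
have Him x y : Fq_dep q (u x) (u y).
  apply: Hs; rewrite !hu.
  transitivity ((y * h x - x * h y) * (M 0 0 * M 1 1 - M 0 1 * M 1 0)).
    by rewrite /u /v; ring.
  by rewrite dM mulr0.
have := count_additive uD Hker Him.
by rewrite hL mulnn leqNgt ltn_exp2l ?n3.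
Qed.

Lemma prim_exists : exists w : L, ((q ^ n).-1).-primitive_root w.
Proof.
pose rs := enum [pred x : L | x != 0].
have gt1 : (1 < q ^ n)%N by rewrite -hL; exact: finNzRing_gt1.
have szrs : size rs = (q ^ n).-1 by rewrite -cardE cardC1 hL.
have N0 : (0 < (q ^ n).-1)%N by rewrite -ltnS prednK // ltnW.
have Hall : all (q ^ n).-1.-unity_root rs.
  apply/allP => x; rewrite mem_enum inE => nx.
  rewrite unity_rootE; apply/eqP; apply: (mulIf nx).
  rewrite mul1r -exprSr prednK; last exact: ltnW.
  rewrite -hL; exact: expf_card.
have Hsz : ((q ^ n).-1 <= size rs)%N by rewrite szrs.
have /hasP [w _ pw] := has_prim_root N0 Hall (enum_uniq _) Hsz.
by exists w.
Qed.

Lemma big_gcd_dvd (I : finType) (P : pred I) (F : I -> nat) j :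
  P j -> (\big[gcdn/0%N]_(i | P i) F i %| F j)%N.
Proof. by move=> Pj; rewrite (bigD1 j) //= dvdn_gcdl. Qed.

Lemma tsup (b : 'I_n -> L) (i j : 'I_n) :
  b i != 0 -> b j != 0 -> (i %% t_of b = j %% t_of b)%N.
Proof.
move=> bi bj; case: (eqVneq i j) => [-> //|ij].
set t := t_of b.
have tn : (t %| n)%N by exact: dvdn_gcdr.
have d1 : (t %| ((i + n - j) %% n))%N.
  apply: (dvdn_trans (dvdn_gcdl _ _)).
  apply: (dvdn_trans (@big_gcd_dvd _ xpredT _ i isT)).
  by apply: big_gcd_dvd; rewrite ij mulf_neq0.
have jn : (j <= n)%N by exact: ltnW (ltn_ord j).
move: d1; rewrite /dvdn (modn_dvdm _ tn) -addnBA // => /eqP H1.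
apply/eqP; rewrite -(eqn_modDr (n - j)) H1 subnKC // eq_sym.
by move: tn; rewrite /dvdn.
Qed.

Lemma lam_pow (lam : L) t m s : lam ^+ (q ^ t)%N = lam ->
  lam ^+ (q ^ (m * t + s))%N = lam ^+ (q ^ s)%N.
Proof.
move=> Ht; rewrite expnD exprM; congr (_ ^+ _).
elim: m => [|m IH]; first by rewrite mul0n expn0 expr1.
by rewrite mulSn expnD exprM Ht IH.
Qed.

Lemma SL (b : 'I_n -> L) : scattered q b -> standard_form b ->
  exists lam k, (forall x, qlin q b (lam * x) = lam ^+ (q ^ k)%N * qlin q b x)
                /\ lam ^+ (q ^ k)%N != lam.
Proof.
move=> Hs; rewrite /standard_form => ht.
set t := t_of b in ht.
have tn : (t %| n)%N by exact: dvdn_gcdr.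
have [w pw] := prim_exists.
have qt1 : ((q ^ t).-1 %| (q ^ n).-1)%N.
  by rewrite -(divnK tn) mulnC expnM; exact: dvdn_pred_predX.
pose lam := w ^+ ((q ^ n).-1 %/ (q ^ t).-1).
have plam : (q ^ t).-1.-primitive_root lam := dvdn_prim_root pw qt1.
have qt0 : (0 < q ^ t)%N by rewrite expn_gt0 ltnW.
have lam0 : lam != 0.
  apply/negP => /eqP l0; have := prim_expr_order plam; rewrite l0 expr0n.
  have -> : ((q ^ t).-1 == 0)%N = false.
    apply/negbTE; rewrite -lt0n -ltnS prednK // -{1}(expn0 q) ltn_exp2l //.
    exact: ltnW ht.
  by move/eqP; rewrite eq_sym oner_eq0.
have lamt : lam ^+ (q ^ t)%N = lam.
  by rewrite -(prednK qt0) exprS prim_expr_order // mulr1.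
have lam_mod i : lam ^+ (q ^ i)%N = lam ^+ (q ^ (i %% t))%N.
  by rewrite {1}(divn_eq i t) lam_pow.
have lam_ne s : (0 < s < t)%N -> lam ^+ (q ^ s)%N != lam.
  case/andP => s0 st; apply/eqP => E.
  have qs1 : (1 < q ^ s)%N by rewrite -{1}(expn0 q) ltn_exp2l.
  have : lam ^+ (q ^ s).-1 == 1.
    apply/eqP; apply: (mulIf lam0); rewrite mul1r -exprSr prednK; last exact: ltnW.
    exact: E.
  rewrite -(prim_order_dvd plam) => /dvdn_leq.
  have : (q ^ s < q ^ t)%N by rewrite ltn_exp2l.
  move: qs1; rewrite -subn1 -(subn1 (q ^ t)).
  move: (q ^ s)%N (q ^ t)%N => A B; lia.
have notFq : ~~ in_Fq q lam.
  apply/negP => /eqP Hl; move: (lam_ne 1%N); rewrite expn1 Hl eqxx.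
  by rewrite ht => /(_ isT).
have key r : (forall i, b i != 0 -> (i %% t = r %% t)%N) ->
    forall x, qlin q b (lam * x) = lam ^+ (q ^ r)%N * qlin q b x.
  move=> Hr x; rewrite /qlin mulr_sumr; apply: eq_bigr => i _.
  case: (eqVneq (b i) 0) => [-> | bi]; first by rewrite !mul0r mulr0.
  by rewrite exprMn (lam_mod i) (Hr i bi) -(lam_mod r) mulrCA.
case: (pickP (fun i => b i != 0)) => [r br | nob].
  exists lam, r; split.
    by apply: key => i bi; apply: tsup.
  rewrite lam_mod; case: (posnP (r %% t)) => [r0 | rpos].
    rewrite r0 expn0 expr1; apply/negP => /eqP E.
    move/negP: notFq; apply; apply: (scalar_Fq Hs).
    have := key r (fun i bi => tsup bi br) 1; rewrite lam_mod r0 expn0 expr1 mulr1.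
    exact.
  by apply: lam_ne; rewrite rpos ltn_pmod // ltnW.
exfalso; move/negP: notFq; apply; apply: (scalar_Fq Hs).
have h0 x : qlin q b x = 0.
  rewrite /qlin big1 // => i _; have := nob i; rewrite /= => /negbFE /eqP ->.
  by rewrite mul0r.
by rewrite !h0 mulr0.
Qed.

Lemma SL_inj (b : 'I_n -> L) : scattered q b -> standard_form b ->
  injective (qlin q b).
Proof.
move=> Hs Hst; have [lam [k [Hl nl]]] := SL Hs Hst.
suff K x : qlin q b x = 0 -> x = 0.
  move=> x y E; apply/eqP; rewrite -subr_eq0; apply/eqP/K.
  by rewrite gB ?E ?subrr //; exact: qlinD.
move=> hx; apply/eqP/negPn/negP => nx.
have [c [d [Fc Fd cd E]]] : Fq_dep q x (lam * x).
  by apply: Hs; rewrite Hl hx !mulr0 subrr.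
have dnz : d != 0.
  apply: contraTneq cd => d0; move: E; rewrite d0 mul0r addr0 => /eqP.
  by rewrite mulf_eq0 (negbTE nx) orbF => /eqP ->; rewrite eqxx.
have El : lam = - c / d.
  apply: (mulfI dnz); apply: (mulIf nx).
  have Ek : d * (lam * x) = - (c * x) by apply/eqP; rewrite -addr_eq0 addrC E.
  by rewrite -mulrA Ek; field.
move/negP: nl; apply; apply/eqP; apply: FqX; rewrite El.
by apply: Fq_mul; [apply: Fq_opp | apply: Fq_inv].
Qed.
End QF.

Definition dm (L : finFieldType) (a d : L) : 'M[L]_2 :=
  \matrix_(i < 2, j < 2) (if i == j then (if i == 0 then a else d) else 0).

Lemma dmE (L : finFieldType) (a d : L) :
  [/\ dm a d 0 0 = a, dm a d 0 1 = 0, dm a d 1 0 = 0 & dm a d 1 1 = d].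
Proof. by rewrite /dm !mxE. Qed.

Lemma qinvP (L : finFieldType) q n (b : 'I_n -> L) :
  injective (qlin q b) -> forall y, qlin q b (qinv q b y) = y.
Proof.
move=> inj y; have [f fK Kf] := injF_bij inj.
rewrite /qinv; case: pickP => [x /eqP //| /(_ (f y))].
by rewrite Kf eqxx.
Qed.

Lemma n2_form (L : finFieldType) q (hq : (1 < q)%N) (hL : #|L| = (q ^ 2)%N)
  (b : 'I_2 -> L) : scattered q b -> standard_form b ->
  exists c, c != 0 /\ forall x, qlin q b x = c * x ^+ q.
Proof.
move=> Hs Hst.
have hE x : qlin q b x = b 0 * x + b 1 * x ^+ q.
  rewrite /qlin !big_ord_recl big_ord0 addr0 /= expn0 expr1.
  have E1 : lift ord0 ord0 = 1 :> 'I_2 by apply: val_inj.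
  have E0 : ord0 = 0 :> 'I_2 by apply: val_inj.
  by rewrite E1 E0 /= expn1.
have [lam [k [Hl nl]]] := SL hq (isT : (1 < 2)%N) hL Hs Hst.
have inj := SL_inj hq (isT : (1 < 2)%N) hL Hs Hst.
have t2 : t_of b = 2%N.
  have : (t_of b %| 2)%N by exact: dvdn_gcdr.
  move: Hst; rewrite /standard_form; move: (t_of b) => t t1 /dvdn_leq.
  by move=> /(_ isT); lia.
have b0 : b 0 = 0.
  apply/eqP/negPn/negP => b0.
  case: (eqVneq (b 1) 0) => b1.
    have := Hl 1; rewrite !hE b1 !mul0r !addr0 !mulr1 => E.
    have : b 0 * (lam ^+ (q ^ k)%N - lam) = 0.
      by transitivity (lam ^+ (q ^ k)%N * b 0 - b 0 * lam); [ring | rewrite E subrr].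
    by move/eqP; rewrite mulf_eq0 (negbTE b0) /= subr_eq0 (negbTE nl).
  by have := tsup b0 b1; rewrite t2.
exists (b 1); split; last by move=> x; rewrite hE b0 mul0r add0r.
apply/negP => /eqP b1.
have : qlin q b 1 = qlin q b 0 by rewrite !hE b0 b1 !mul0r addr0.
by move/inj/eqP; rewrite oner_eq0.
Qed.

Theorem proposition4p8 (L : finFieldType) (q n : nat)
  (hq : (1 < q)%N) (hn : (1 < n)%N) (hL : #|L| = (q ^ n)%N)
  (bf bh bh' : 'I_n -> L) :
  scattered q bf -> scattered q bh -> scattered q bh' ->
  standard_form bh -> standard_form bh' ->
  GL_equiv (qlin q bh) (qlin q bf) -> GL_equiv (qlin q bh') (qlin q bf) ->
  exists a b : L, [/\ a != 0, b != 0 &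
    (forall x, qlin q bh' x = a * qlin q bh (b * x)) \/
    (forall x, qlin q bh' x = a * qinv q bh (b * x))].
Proof.
move=> sf sh sh' sth sth' Gh Gh'.
case: (ltnP 2 n) => [n3 | n2]; last first.
  have e2 : n = 2%N by lia.
  subst n.
  have [c [c0 Hc]] := n2_form hq hL sh sth.
  have [c' [c0' Hc']] := n2_form hq hL sh' sth'.
  exists (c' / c), 1; split.
  - by rewrite mulf_neq0 // invr_eq0.
  - exact: oner_neq0.
  - by left => x; rewrite Hc Hc' mul1r; field.
have [A1 [U1 R1 R1']] := GL_Rel Gh.
have [A2 [U2 R2 R2']] := GL_Rel Gh'.
have hD := qlinD hn hL bh.
have hD' := qlinD hn hL bh'.
move: (SL_inj hq hn hL sh sth) => hinj.
move: (qinvP hinj) => hinvP.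
move: (SL hq hn hL sh sth) (SL hq hn hL sh' sth') => [lam [k [Hl nl]]] [mu [k' [Hm nm]]].
have unitS M : Rel (qlin q bh') (qlin q bh') M -> M != 0 -> M \in unitmx.
  by move=> HM nz; apply: (Rel_unit hq hn hL sh' n3 HM nz).
have invS M : Rel (qlin q bh') (qlin q bh') M -> M \in unitmx ->
    Rel (qlin q bh') (qlin q bh') (invmx M).
  by move=> HM UM; apply: Rel_inv.
move: (qlin q bh) (qlin q bh') (qlin q bf) hD hD' hinj hinvP Hl Hm unitS invS R1 R1' R2 R2'.
move=> h h' f hD hD' hinj hinvP Hl Hm unitS invS R1 R1' R2 R2'.
pose A := A1 *m invmx A2.
pose B := A2 *m invmx A1.
have RA : Rel h h' A := Rel_comp R1 R2'.
have RB : Rel h' h B := Rel_comp R2 R1'.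
have AB : A *m B = 1.
  by rewrite /A /B mulmxA -(mulmxA A1) mulVmx // mulmx1 mulmxV.
have UA : A \in unitmx by rewrite unitmx_mul U1 unitmx_inv U2.
clearbody A B.
pose lam' := lam ^+ (q ^ k)%N.
pose mu' := mu ^+ (q ^ k')%N.
have [D00 D01 D10 D11] := dmE lam lam'.
have [E00 E01 E10 E11] := dmE mu mu'.
have RD : Rel h h (dm lam lam').
  by move=> x; rewrite D00 D01 D10 D11 mulr0 addr0 mulr0 add0r mulrC Hl mulrC.
have RD' : Rel h' h' (dm mu mu').
  by move=> x; rewrite E00 E01 E10 E11 mulr0 addr0 mulr0 add0r mulrC Hm mulrC.
pose X := B *m dm lam lam' *m A.
have RX : Rel h' h' X := Rel_comp (Rel_comp RB RD) RA.
have DA : dm lam lam' *m A = A *m X.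
  by rewrite /X !mulmxA AB mul1mx.
clearbody X.
have comm := Rel_comm hD' unitS invS RX RD'.
have nm' : mu' != mu := nm.
have nl' : lam' != lam := nl.
have X01 : X 0 1 = 0.
  have := congr1 (fun M : 'M[L]_2 => M 0 1) comm.
  rewrite /= !mul2E ?E00 ?E01 ?E10 ?E11 mulr0 add0r mul0r addr0 => /eqP.
  by rewrite [X 0 1 * _]mulrC -subr_eq0 -mulrBl mulf_eq0 subr_eq0 (negbTE nm') /= => /eqP.
have X10 : X 1 0 = 0.
  have := congr1 (fun M : 'M[L]_2 => M 1 0) comm.
  rewrite /= !mul2E ?E00 ?E01 ?E10 ?E11 mulr0 addr0 mul0r add0r => /eqP.
  by rewrite [X 1 0 * _]mulrC -subr_eq0 -mulrBl mulf_eq0 subr_eq0 eq_sym (negbTE nm') /= => /eqP.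
have F i j := congr1 (fun M : 'M[L]_2 => M i j) DA.
move: (F 0 0) (F 0 1) (F 1 0) (F 1 1) => /=.
rewrite !mul2E ?D00 ?D01 ?D10 ?D11 X01 X10 !mul0r !mulr0 !addr0 !add0r.
move=> F00 F01 F10 F11.
have detA : A 0 0 * A 1 1 - A 0 1 * A 1 0 != 0.
  by move: UA; rewrite unitmxE unitfE det2.
case: (eqVneq (A 0 0) 0) => [a00 | a00].
  move: detA; rewrite a00 mul0r sub0r oppr_eq0 mulf_eq0 negb_or => /andP [a01 a10].
  have x00 : X 0 0 = lam'.
    by apply: (mulIf a10); rewrite mulrC -F10.
  have x11 : X 1 1 = lam by apply: (mulfI a01); rewrite -F01 mulrC.
  have a11 : A 1 1 = 0.
    apply/eqP; move: F11; rewrite x11 => /eqP.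
    by rewrite [A 1 1 * _]mulrC -subr_eq0 -mulrBl mulf_eq0 subr_eq0 (negbTE nl') /=.
  exists (A 0 1), (A 1 0)^-1; split => //; first by rewrite invr_eq0.
  right => y.
  have := RA (qinv q bh ((A 1 0)^-1 * y)).
  rewrite hinvP a00 a11 mulr0 add0r mulr0 addr0 mulrC mulrA mulfV // mul1r => ->.
  by rewrite mulrC.
have x00 : X 0 0 = lam by apply: (mulfI a00); rewrite -F00 mulrC.
have a10 : A 1 0 = 0.
  apply/eqP; move: F10; rewrite x00 => /eqP.
  by rewrite [A 1 0 * _]mulrC -subr_eq0 -mulrBl mulf_eq0 subr_eq0 (negbTE nl') /=.
move: detA; rewrite a10 mulr0 subr0 mulf_eq0 negb_or => /andP [_ a11].
have x11 : X 1 1 = lam' by apply: (mulfI a11); rewrite -F11 mulrC.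
have a01 : A 0 1 = 0.
  apply/eqP; move: F01; rewrite x11 => /eqP.
  by rewrite [A 0 1 * _]mulrC -subr_eq0 -mulrBl mulf_eq0 subr_eq0 eq_sym (negbTE nl') /=.
exists (A 1 1), (A 0 0)^-1; split => //; first by rewrite invr_eq0.
left => x.
have := RA ((A 0 0)^-1 * x).
rewrite a10 a01 mulr0 addr0 mulr0 add0r mulrC mulrA mulfV // mul1r => ->.
by rewrite mulrC.
Qed.
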